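(* Let $R>0$, $L>0$, and let $f$ be convex and $L$-Lipschitz on an open convex neighborhood of $B:=\{u\in\mathbb{R}^k:\|u\|_2\le R\}$. Let $h=\frac{1}{2L}$ and let $\{u^{(1)},\dots,u^{(m)}\}\subseteq B$ be an $h$-net of $B$ (every $u\in B$ has some $i$ with $\|u-u^{(i)}\|_2\le h$). For each $i$ pick $g_i\in\partial f(u^{(i)})$ and define $\ell_i(u):=f(u^{(i)})+\langle g_i,u-u^{(i)}\rangle$, and define $$G(u):=1+\log\Big(\sum_{i=1}^m\exp(\ell_i(u))\Big).$$ Then for all $u\in B$, $$f(u)\le G(u)\le f(u)+1+\log m.$$ Moreover, such an $h$-net can be chosen with $m\le(1+4LR)^k$.
   Context: $\partial f(u)$ denotes the subdifferential of the convex function $f$ at $u$. *)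

(* Defs.v *)
From HB Require Import structures.
From mathcomp Require Import all_boot all_order all_algebra.
From mathcomp Require Import all_classical all_reals all_analysis.
Set Implicit Arguments. Unset Strict Implicit. Unset Printing Implicit Defensive.
Import Order.TTheory GRing.Theory Num.Theory.
Local Open Scope ring_scope.
Local Open Scope classical_set_scope.

Definition edot {R : realType} {k : nat} (u v : 'rV[R]_k) : R :=
  \sum_(i < k) u ord0 i * v ord0 i.
Definition enorm {R : realType} {k : nat} (u : 'rV[R]_k) : R :=
  Num.sqrt (edot u u).

Definition eball {R : realType} (k : nat) (r : R) : set 'rV[R]_k :=
  [set u | enorm u <= r].

Definition cvx_set_on {R : realType} {k : nat} (U : set 'rV[R]_k) : Prop :=
  forall x y, U x -> U y -> forall t : R, 0 <= t <= 1 ->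
    U (t *: x + (1 - t) *: y).

Definition cvx_fun_on {R : realType} {k : nat} (U : set 'rV[R]_k)
  (f : 'rV[R]_k -> R) : Prop :=
  forall x y, U x -> U y -> forall t : R, 0 <= t <= 1 ->
    f (t *: x + (1 - t) *: y) <= t * f x + (1 - t) * f y.

Definition lip_on {R : realType} {k : nat} (U : set 'rV[R]_k)
  (L : R) (f : 'rV[R]_k -> R) : Prop :=
  forall x y, U x -> U y -> `|f x - f y| <= L * enorm (x - y).

Definition subdiffU {R : realType} {k : nat} (U : set 'rV[R]_k)
  (f : 'rV[R]_k -> R) (u : 'rV[R]_k) : set 'rV[R]_k :=
  [set g | forall v, U v -> f u + edot g (v - u) <= f v].

Definition is_hnet {R : realType} {k m : nat} (B : set 'rV[R]_k) (h : R)
  (p : 'I_m -> 'rV[R]_k) : Prop :=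
  (forall i, B (p i)) /\ (forall u, B u -> exists i, enorm (u - p i) <= h).

Definition smoothG {R : realType} {k m : nat} (f : 'rV[R]_k -> R)
  (p g : 'I_m -> 'rV[R]_k) (u : 'rV[R]_k) : R :=
  1 + ln (\sum_(i < m) expR (f (p i) + edot (g i) (u - p i))).

(* Submission.v *)
Require Import Defs.
From HB Require Import structures.
From mathcomp Require Import all_boot all_order all_algebra.
From mathcomp Require Import all_classical all_reals all_analysis.
From mathcomp Require Import ring lra zify.
From Stdlib Require Import Classical.
Import Order.TTheory GRing.Theory Num.Theory.
Import numFieldNormedType.Exports.
Local Open Scope ring_scope.
Local Open Scope classical_set_scope.

Section Norms.
Context {R : realType} {k : nat}.
Implicit Types (u v w : 'rV[R]_k).

Lemma edotC u v : edot u v = edot v u.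
Proof. by apply: eq_bigr => i _; rewrite mulrC. Qed.

Lemma edotDl u v w : edot (u + v) w = edot u w + edot v w.
Proof. by rewrite /edot -big_split; apply: eq_bigr => i _; rewrite !mxE mulrDl. Qed.

Lemma edotZl (a : R) u v : edot (a *: u) v = a * edot u v.
Proof. by rewrite /edot mulr_sumr; apply: eq_bigr => i _; rewrite !mxE mulrA. Qed.

Lemma edotNl u v : edot (- u) v = - edot u v.
Proof. by rewrite -scaleN1r edotZl mulN1r. Qed.

Lemma edotDr u v w : edot w (u + v) = edot w u + edot w v.
Proof. by rewrite !(edotC w) edotDl. Qed.

Lemma edotZr (a : R) u v : edot v (a *: u) = a * edot v u.
Proof. by rewrite !(edotC v) edotZl. Qed.

Lemma edotNr u v : edot v (- u) = - edot v u.
Proof. by rewrite !(edotC v) edotNl. Qed.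

Lemma edot_ge0 u : 0 <= edot u u.
Proof. by apply: sumr_ge0 => i _; rewrite -expr2 sqr_ge0. Qed.

Lemma enorm_ge0 u : 0 <= enorm u.
Proof. exact: sqrtr_ge0. Qed.

Lemma enorm_sqr u : enorm u ^+ 2 = edot u u.
Proof. by rewrite sqr_sqrtr // edot_ge0. Qed.

Lemma edot0_eq0 u : edot u u = 0 -> u = 0.
Proof.
move=> h; apply/rowP => i; rewrite mxE.
have /eqP := @psumr_eq0P R _ xpredT (fun j => u ord0 j * u ord0 j)
  (fun j _ => ltac:(by cbv beta; rewrite -expr2 sqr_ge0)) h i isT.
by rewrite mulf_eq0 orbb => /eqP.
Qed.

Lemma CS u v : edot u v <= enorm u * enorm v.
Proof.
have [v0|vn0] := eqVneq (edot v v) 0.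
  by rewrite (@edot0_eq0 v v0) {1}/edot big1 ?mulr_ge0 ?enorm_ge0 // => i _; rewrite mxE mulr0.
have Bp : 0 < edot v v by rewrite lt_def vn0 edot_ge0.
set A := edot u u; set B := edot v v; set D := edot u v.
have h : 0 <= edot (u - (D / B) *: v) (u - (D / B) *: v) by apply: edot_ge0.
have e : edot (u - (D / B) *: v) (u - (D / B) *: v) = A - D ^+ 2 / B.
  rewrite !(edotDl, edotDr, edotNl, edotNr, edotZl, edotZr) (edotC v u) -/A -/B -/D.
  by field; rewrite gt_eqF.
have hD : D ^+ 2 <= A * B.
  by rewrite -ler_pdivrMr // -subr_ge0 -e.
have : D ^+ 2 <= (enorm u * enorm v) ^+ 2 by rewrite exprMn !enorm_sqr.
move=> h2; have e0 : 0 <= enorm u * enorm v by rewrite mulr_ge0 ?enorm_ge0.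
move: h2; rewrite -ler_sqrt ?sqr_ge0 // !sqrtr_sqr (ger0_norm e0) => h3.
exact: le_trans (ler_norm D) h3.
Qed.

Lemma enormD u v : enorm (u + v) <= enorm u + enorm v.
Proof.
rewrite /enorm -(ger0_norm (addr_ge0 (sqrtr_ge0 (edot u u)) (sqrtr_ge0 (edot v v)))).
rewrite -sqrtr_sqr ler_sqrt ?sqr_ge0 //.
rewrite edotDl !edotDr (edotC v u) sqrrD !sqr_sqrtr ?edot_ge0 //.
have := CS u v; rewrite /enorm => h.
move: h; set a := Num.sqrt _; set b := Num.sqrt _ => h.
by rewrite mulr2n; lra.
Qed.

Lemma enormZ (a : R) u : enorm (a *: u) = `|a| * enorm u.
Proof.
by rewrite /enorm edotZl edotZr mulrA -expr2 sqrtrM ?sqr_ge0 // sqrtr_sqr.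
Qed.

Lemma enormN u : enorm (- u) = enorm u.
Proof. by rewrite -scaleN1r enormZ normrN1 mul1r. Qed.

Lemma enormB u v : enorm (u - v) = enorm (v - u).
Proof. by rewrite -enormN opprB. Qed.

Lemma enorm0 : enorm (0 : 'rV[R]_k) = 0.
Proof. by rewrite -(scale0r (0 : 'rV[R]_k)) enormZ normr0 mul0r. Qed.

Lemma coord_le u i : `|u ord0 i| <= enorm u.
Proof.
rewrite /enorm -sqrtr_sqr ler_sqrt ?edot_ge0 //.
rewrite /edot (bigD1 i) //= -expr2 lerDl sumr_ge0 // => j _; by rewrite -expr2 sqr_ge0.
Qed.

Lemma enorm_le_k u (c : R) : 0 <= c -> (forall i, `|u ord0 i| <= c) -> enorm u <= k%:R * c.
Proof.
move=> c0 h; rewrite /enorm -(ger0_norm (mulr_ge0 (ler0n R k) c0)) -sqrtr_sqr ler_sqrt ?sqr_ge0 //.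
apply: (@le_trans _ _ (\sum_(i < k) c ^+ 2)).
  apply: ler_sum => i _; rewrite -expr2 -real_normK ?num_real //.
  by rewrite lerXn2r ?nnegrE ?normr_ge0.
rewrite sumr_const card_ord exprMn -[c ^+ 2 *+ k]mulr_natl; apply: ler_wpM2r; first exact: sqr_ge0.
by rewrite -natrX ler_nat; case: (k) => // n; rewrite expnS leq_pmulr.
Qed.
End Norms.

Lemma subgrad_norm (R : realType) (k : nat) (U : set 'rV[R]_k) (L : R) f p g :
  0 < L -> open U -> U p -> lip_on U L f -> subdiffU U f p g -> enorm g <= L.
Proof.
move=> L0 oU Up lip sg.
have /nbhs_ballP [e e0 be] : nbhs p U by exact: oU.
set t := e / (2 * (`|g| + 1)).
have t0 : 0 < t by rewrite /t divr_gt0 // mulr_gt0 // ltr_wpDl.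
have Ut : U (p + t *: g).
  apply: be; rewrite -ball_normE /ball_ /= opprD addrA subrr sub0r normrN normrZ.
  rewrite gtr0_norm // /t -mulrA gtr_pMr // ltr_pdivrMl ?mulr_gt0 ?ltr_wpDl //.
  rewrite mulr1; have := normr_ge0 g; lra.
have h1 := sg _ Ut.
have h2 := lip _ _ Ut Up.
rewrite addrAC subrr add0r in h1.
rewrite (addrC p) addrK enormZ (gtr0_norm t0) in h2.
have h3 : t * edot g g <= t * (L * enorm g).
  rewrite -edotZr; apply: le_trans (_ : f (t *: g + p) - f p <= _).
    by move: h1; rewrite (addrC p); lra.
  by apply: le_trans (ler_norm _) _; rewrite mulrCA.
rewrite ler_pM2l // -enorm_sqr expr2 in h3.
have [->|en0] := eqVneq (enorm g) 0; first exact: ltW.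
have ep : 0 < enorm g by rewrite lt_def en0 enorm_ge0.
by rewrite -(ler_pM2r ep) mulrC.
Qed.

Lemma part1 (R : realType) (k : nat) (Rad L : R) (U : set 'rV[R]_k)
  (f : 'rV[R]_k -> R) (m : nat) (p g : 'I_m -> 'rV[R]_k) :
  0 < L -> open U -> @eball R k Rad `<=` U -> lip_on U L f ->
  is_hnet (@eball R k Rad) (1 / (2 * L)) p ->
  (forall i, subdiffU U f (p i) (g i)) ->
  forall u, @eball R k Rad u ->
    f u <= smoothG f p g u /\ smoothG f p g u <= f u + 1 + ln m%:R.
Proof.
move=> L0 oU BU lip [pB net] sg u Bu.
have [i hi] := net u Bu.
set l := fun j => f (p j) + edot (g j) (u - p j).
have Sge : expR (l i) <= \sum_(j < m) expR (l j).
  rewrite (bigD1 i) //= lerDl; apply: sumr_ge0 => j _; exact: ltW (expR_gt0 _).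
have Spos : 0 < \sum_(j < m) expR (l j) := lt_le_trans (expR_gt0 _) Sge.
rewrite /smoothG -/l; split.
  have : l i <= ln (\sum_(j < m) expR (l j)).
    by rewrite -[X in X <= _]expRK ler_ln ?posrE ?expR_gt0.
  have h1 : f u - f (p i) <= 1 / 2.
    apply: le_trans (ler_norm _) _; apply: le_trans (lip _ _ (BU _ Bu) (BU _ (pB i))) _.
    have -> : 1 / 2 = L * (1 / (2 * L)) by field; rewrite gt_eqF.
    by rewrite ler_pM2l.
  have h2 : - edot (g i) (u - p i) <= 1 / 2.
    rewrite -edotNl; apply: le_trans (@CS _ _ _ _) _; rewrite enormN.
    have gn := @subgrad_norm _ _ _ _ _ _ _ L0 oU (BU _ (pB i)) lip (sg i).
    have -> : 1 / 2 = L * (1 / (2 * L)) by field; rewrite gt_eqF.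
    by apply: ler_pM; rewrite ?enorm_ge0.
  rewrite /l; lra.
have m0 : (0 < m)%N by apply: leq_ltn_trans (ltn_ord i).
have hle : \sum_(j < m) expR (l j) <= m%:R * expR (f u).
  have -> : m%:R * expR (f u) = \sum_(j < m) expR (f u) by rewrite sumr_const card_ord mulr_natl.
  apply: ler_sum => j _; rewrite ler_expR /l.
  exact: sg j u (BU _ Bu).
have : ln (\sum_(j < m) expR (l j)) <= ln m%:R + f u.
  rewrite -[X in _ <= _ + X]expRK -lnM ?posrE ?expR_gt0 ?ltr0n //.
  by rewrite ler_ln ?posrE ?mulr_gt0 ?expR_gt0 ?ltr0n.
lra.
Qed.

Lemma count_inj (T1 T2 : eqType) (s : seq T1) (t : seq T2) (f : T1 -> T2) :
  uniq s -> {in s &, injective f} -> (forall x, x \in s -> f x \in t) ->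
  (size s <= size t)%N.
Proof.
move=> us fi ft; rewrite -(size_map f); apply: uniq_leq_size.
  by rewrite map_inj_in_uniq.
by move=> y /mapP [x xs ->]; exact: ft.
Qed.

Lemma intr_natz (R : pzRingType) (n : nat) : ((n%:Z)%:~R : R) = n%:R.
Proof. by []. Qed.

Section Lattice.
Variables (R : realType) (k : nat).

Definition iv (z : 'rV[int]_k) : 'rV[R]_k := \row_i (z ord0 i)%:~R.
Definition zn (z : 'rV[int]_k) := enorm (iv z).

Lemma ivD (z1 z2 : 'rV[int]_k) : iv (z1 + z2) = iv z1 + iv z2.
Proof. by apply/rowP => i; rewrite !mxE intrD. Qed.

Lemma ivB (z1 z2 : 'rV[int]_k) : iv (z1 - z2) = iv z1 - iv z2.
Proof. by apply/rowP => i; rewrite !mxE intrD intrN. Qed.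

Lemma ivZ (c : int) (z : 'rV[int]_k) : iv (c *: z) = c%:~R *: iv z.
Proof. by apply/rowP => i; rewrite !mxE intrM. Qed.

Lemma iv0 : iv 0 = 0.
Proof. by apply/rowP => i; rewrite !mxE. Qed.

Lemma iv_inj : injective iv.
Proof.
move=> z1 z2 /rowP h; apply/rowP => i; move: (h i); rewrite !mxE => /eqP.
by rewrite eqr_int => /eqP; rewrite !ord1.
Qed.

Definition W (n : nat) : seq 'rV[int]_k :=
  [seq \row_i ((f i : nat)%:Z) | f : {ffun 'I_k -> 'I_n} <- enum {ffun 'I_k -> 'I_n}].

Lemma W_uniq n : uniq (W n).
Proof.
rewrite map_inj_uniq ?enum_uniq // => f g /rowP h; apply/ffunP => i.
by apply: val_inj; move: (h i); rewrite !mxE => -[].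
Qed.

Lemma size_W n : size (W n) = (n ^ k)%N.
Proof. by rewrite size_map -cardE card_ffun !card_ord. Qed.

Lemma W_mem n (w : 'rV[int]_k) : w \in W n -> forall i, (0 <= w ord0 i) && (w ord0 i < n%:Z).
Proof.
by move=> /mapP [f _ ->] i; rewrite mxE ltz_nat ltn_ord.
Qed.

Lemma mem_W n (w : 'rV[int]_k) : (forall i, (0 <= w ord0 i) && (w ord0 i < n%:Z)) -> w \in W n.
Proof.
move=> h.
have hi i : (`|w ord0 i| < n)%N.
  by have /andP [a b] := h i; rewrite -ltz_nat gez0_abs.
apply/mapP; exists [ffun i => Ordinal (hi i)]; first by rewrite mem_enum.
apply/rowP => i; rewrite !mxE ffunE /= ord1.
by have /andP [a _] := h i; rewrite gez0_abs.
Qed.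

Definition box (M : nat) : seq 'rV[int]_k :=
  [seq w - const_mx (M%:Z) | w <- W (2 * M).+1].

Lemma box_uniq M : uniq (box M).
Proof. by rewrite map_inj_uniq ?W_uniq // => a b /addIr. Qed.

Lemma size_box M : size (box M) = (((2 * M).+1) ^ k)%N.
Proof. by rewrite size_map size_W. Qed.

Lemma mem_box M (z : 'rV[int]_k) : (forall i, (- M%:Z <= z ord0 i) && (z ord0 i <= M%:Z)) -> z \in box M.
Proof.
move=> h; apply/mapP; exists (z + const_mx M%:Z); last by rewrite addrK.
apply: mem_W => i; rewrite !mxE; have /andP [a b] := h i.
apply/andP; split; first by rewrite -lerBlDr sub0r.
clear h; move: a b; set y := z ord0 i => a b. rewrite -addn1 PoszD PoszM; lia.
Qed.

Definition pts (s : R) : seq 'rV[int]_k :=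
  [seq z <- box `|Num.ceil s|%N | zn z <= s].

Definition C (s : R) : nat := size (pts s).

Lemma pts_uniq s : uniq (pts s).
Proof. by rewrite filter_uniq // box_uniq. Qed.

Lemma mem_pts s (z : 'rV[int]_k) : (z \in pts s) = (zn z <= s).
Proof.
rewrite mem_filter; apply/andP/idP => [[]//|h]; split => //.
apply: mem_box => i.
have h1 : `|(z ord0 i)%:~R| <= s.
  apply: le_trans h; have := @coord_le _ _ (iv z) i; by rewrite mxE.
have s0 : 0 <= s := le_trans (normr_ge0 _) h1.
have c0 : 0 <= Num.ceil s by rewrite ceil_ge0; lra.
rewrite gez0_abs //.
have h2 : `|z ord0 i| <= Num.ceil s.
  rewrite -(ler_int R); apply: le_trans (ceil_ge s).
  by rewrite intr_norm.
by move: h2; rewrite ler_norml.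
Qed.

Lemma Cmono s s' : s <= s' -> (C s <= C s')%N.
Proof.
move=> ss; apply: (@count_inj _ _ _ _ id) => //; first exact: pts_uniq.
by move=> z; rewrite !mem_pts => h; apply: le_trans ss.
Qed.

Lemma zn0 : zn 0 = 0.
Proof. by rewrite /zn iv0 enorm0. Qed.

Lemma C0 s : 0 <= s -> (1 <= C s)%N.
Proof.
move=> s0; rewrite /C lt0n size_eq0; apply/eqP => e.
have : (0 : 'rV[int]_k) \in pts s by rewrite mem_pts zn0.
by rewrite e.
Qed.

Lemma Cneg s : s < 0 -> C s = 0%N.
Proof.
move=> s0; rewrite /C; case E: (pts s) => [//|z l].
have : z \in pts s by rewrite E mem_head.
rewrite mem_pts /zn => h; suff : False by []; have := @enorm_ge0 _ _ (iv z); lra.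
Qed.

Lemma Cpoly s : 0 <= s -> (C s)%:R <= (2 * s + 3) ^+ k :> R.
Proof.
move=> s0.
have : (C s <= ((2 * `|Num.ceil s|%N).+1) ^ k)%N.
  by rewrite -size_box /C /pts size_filter count_size.
rewrite -(ler_nat R) => h; apply: le_trans h _.
rewrite natrX; apply: lerXn2r; rewrite ?nnegrE ?ler0n //; first lra.
have c0 : 0 <= Num.ceil s by rewrite ceil_ge0; lra.
rewrite -addn1 natrD natrM.
have -> : (`|Num.ceil s|%N%:R : R) = (Num.ceil s)%:~R by rewrite -intr_natz gez0_abs.
have := ceilB1_lt s; rewrite intrD; lra.
Qed.
End Lattice.

Lemma count_pairs (S T U : eqType) (s : seq S) (t : seq T) (u : seq U) (F : S -> T -> U) :
  uniq s -> uniq t -> (forall a b, a \in s -> b \in t -> F a b \in u) ->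
  (forall a b a' b', a \in s -> b \in t -> a' \in s -> b' \in t -> F a b = F a' b' -> a = a' /\ b = b') ->
  (size s * size t <= size u)%N.
Proof.
move=> us ut Fu Fi.
rewrite -(size_allpairs pair).
apply: (@count_inj _ _ _ _ (fun p => F p.1 p.2)).
- by rewrite allpairs_uniq // => -[a b] [c d].
- move=> [a b] [c d] /allpairsP [[a' b'] [/= ha hb [-> ->]]] /allpairsP [[c' d'] [/= hc hd [-> ->]]] /=.
  by move=> e; have [-> ->] := Fi _ _ _ _ ha hb hc hd e.
- by move=> [a b] /allpairsP [[a' b'] [/= ha hb [-> ->]]]; exact: Fu.
Qed.

Section Lattice2.
Variables (R : realType) (k : nat).
Local Notation iv := (@iv R k).
Local Notation zn := (@zn R k).
Local Notation C := (@C R k).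
Local Notation pts := (@pts R k).

Lemma enormBle (a b : 'rV[R]_k) : enorm (a - b) <= enorm a + enorm b.
Proof. by apply: le_trans (enormD _ _) _; rewrite enormN. Qed.

Lemma zn_W n w : w \in @W k n -> zn w <= k%:R * n%:R.
Proof.
move=> /W_mem h; apply: enorm_le_k => // i; rewrite mxE.
have /andP [a b] := h i.
by rewrite ger0_norm ?ler0z // -intr_natz ler_int ltW.
Qed.

Lemma Cup (n : nat) (t : R) : (0 < n)%N -> (C (n%:R * t) <= n ^ k * C (t + k%:R))%N.
Proof.
move=> n0; rewrite mulnC -(size_W k n).
have nz : (n%:Z != 0) by rewrite eqz_nat -lt0n.
have nR : (0 : R) < n%:R by rewrite ltr0n.
set q := fun y : 'rV[int]_k => map_mx (fun a => (a %/ n%:Z)%Z) y.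
set r := fun y : 'rV[int]_k => map_mx (fun a => (a %% n%:Z)%Z) y.
have yqr y : iv y = n%:R *: iv (q y) + iv (r y).
  by apply/rowP => i; rewrite !mxE {1}(divz_eq (y ord0 i) n%:Z) intrD intrM intr_natz mulrC.
rewrite /C -(size_allpairs pair).
apply: (@count_inj _ _ _ _ (fun y => (q y, r y))).
- exact: pts_uniq.
- move=> y1 y2 _ _ [e1 e2]; apply: (@iv_inj R k).
  by rewrite (yqr y1) e1 e2 -yqr.
- move=> y; rewrite mem_pts => hy; apply: allpairs_f.
    rewrite mem_pts; change (enorm (iv (q y)) <= t + k%:R).
    have -> : iv (q y) = n%:R^-1 *: (iv y - iv (r y)).
      by rewrite (yqr y) addrK scalerA mulVf ?scale1r // gt_eqF.
    rewrite /zn enormZ ger0_norm ?invr_ge0 ?ler0n // ler_pdivrMl //.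
    apply: le_trans (enormBle _ _) _.
    have : zn (r y) <= k%:R * n%:R.
      apply: zn_W; apply: mem_W => i; rewrite /r mxE modz_ge0 //=.
      by rewrite ltz_pmod // ltz_nat.
    rewrite /zn in hy *; lra.
  apply: mem_W => i; rewrite /r mxE modz_ge0 //=.
  by rewrite ltz_pmod // ltz_nat.
Qed.

Lemma Clow (n : nat) (t : R) : (0 < n)%N -> (n ^ k * C (t - k%:R) <= C (n%:R * t))%N.
Proof.
move=> n0; rewrite mulnC -(size_W k n).
have nz : (n%:Z != 0) by rewrite eqz_nat -lt0n.
have nR : (0 : R) < n%:R by rewrite ltr0n.
apply: (@count_pairs _ _ _ _ _ _ (fun z w => n%:Z *: z + w)).
- exact: pts_uniq.
- exact: W_uniq.
- move=> z w; rewrite !mem_pts => hz hw.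
  rewrite /zn ivD ivZ intr_natz; apply: le_trans (enormD _ _) _.
  rewrite enormZ ger0_norm ?ler0n //.
  have := @zn_W _ _ hw; rewrite /zn in hz *.
  have : n%:R * enorm (iv z) <= n%:R * (t - k%:R) by rewrite ler_pM2l.
  lra.
- move=> z w z' w' _ hw _ hw' e.
  have ez : z = z'.
    apply/rowP => i; have := congr1 (fun y : 'rV[int]_k => ((y ord0 i) %/ n%:Z)%Z) e.
    rewrite /= !mxE ![n%:Z * _]mulrC !divzMDl // !divz_small ?addr0 //.
      by have := @W_mem _ _ _ hw' i; rewrite /=; lia.
    by have := @W_mem _ _ _ hw i; rewrite /=; lia.
  by split => //; move: e; rewrite ez => /addrI.
Qed.
End Lattice2.

Section Pack.
Variables (R : realType) (k : nat).
Local Notation iv := (@iv R k).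
Local Notation zn := (@zn R k).
Local Notation C := (@C R k).
Local Notation pts := (@pts R k).

Lemma Cpack (m : nat) (p : 'I_m -> 'rV[R]_k) (Rad h x : R) : 0 < x ->
  (forall i, enorm (p i) <= Rad) ->
  (forall i j, i != j -> h < enorm (p i - p j)) ->
  (m * C (x * h / 2 - k%:R) <= C (x * (Rad + h / 2)))%N.
Proof.
move=> x0 pB sep.
set z := fun i => map_mx (fun a : R => Num.floor a) (x *: p i).
set d := fun i => x *: p i - iv (z i).
have dn i : enorm (d i) <= k%:R.
  rewrite -[X in _ <= X]mulr1; apply: enorm_le_k => // j.
  rewrite /d /z !mxE; have /andP [a b] := floor_itv (x * p i ord0 j).
  rewrite intrD in b; rewrite ger0_norm; lra.
have ivz i : iv (z i) = x *: p i - d i by rewrite /d opprB addrC subrK.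
rewrite -[m in (m * _)%N]size_enum_ord.
apply: (@count_pairs _ _ _ _ _ _ (fun i s => z i + s)).
- exact: enum_uniq.
- exact: pts_uniq.
- move=> i s _; rewrite !mem_pts => hs.
  rewrite /Submission.zn in hs.
  change (enorm (iv (z i + s)) <= x * (Rad + h / 2)).
  rewrite ivD; apply: le_trans (enormD _ _) _.
  rewrite ivz; have := enormBle _ _ (x *: p i) (d i).
  rewrite enormZ gtr0_norm //.
  have := dn i; have : x * enorm (p i) <= x * Rad by rewrite ler_pM2l.
  lra.
- move=> i s j s' _ hs _ hs' e.
  have [eij|nij] := eqVneq i j.
    by split => //; move: e; rewrite eij => /addrI.
  exfalso.
  have e2 : iv (z i) - iv (z j) = iv s' - iv s.
    have := congr1 iv e; rewrite !ivD => e3.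
    by rewrite -[iv (z i)](addrK (iv s)) e3 addrAC [iv (z j) + _]addrC addrK.
  rewrite !mem_pts in hs hs'.
  rewrite /Submission.zn in hs.
  rewrite /Submission.zn in hs'.
  have h1 : x * h < x * enorm (p i - p j) by rewrite ltr_pM2l // sep.
  have e3 : x *: (p i - p j) = (d i - d j) + (iv s' - iv s).
    by rewrite -e2 !ivz; apply/rowP => l; rewrite !mxE; ring.
  have := enormD (d i - d j) (iv s' - iv s).
  rewrite -e3 enormZ gtr0_norm //.
  have := enormBle _ _ (d i) (d j); have := enormBle _ _ (iv s') (iv s).
  have := dn i; have := dn j.
  lra.
Qed.
End Pack.

Lemma bernoulli (R : realType) (e : R) (M : nat) : 0 <= e -> 1 + M%:R * e <= (1 + e) ^+ M.
Proof.
move=> e0; elim: M => [|M IH]; first by rewrite mul0r addr0 expr0.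
rewrite exprS; apply: le_trans (_ : (1 + e) * (1 + M%:R * e) <= _); last first.
  by rewrite ler_pM2l //; lra.
have : 0 <= M%:R * e * e by rewrite mulr_ge0 ?mulr_ge0.
rewrite -natr1; nra.
Qed.

Lemma exp_beats_poly (R : realType) (rho A0 B0 : R) (k : nat) :
  1 < rho -> 0 <= A0 -> 0 <= B0 -> exists J : nat, (A0 * J%:R + B0) ^+ k < rho ^+ J.
Proof.
move=> r1 A00 B00.
set e := rho - 1.
have e0 : 0 < e by rewrite /e subr_gt0.
set D := (A0 + B0) * (k.+1)%:R.
have D0 : 0 <= D by rewrite /D mulr_ge0 ?addr_ge0.
set M := (Num.Def.archi_bound (D ^+ k / e ^+ k.+1)).+1.
have hM : D ^+ k / e ^+ k.+1 < M%:R.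
  have g0 : 0 <= D ^+ k / e ^+ k.+1 by exact: divr_ge0 (exprn_ge0 _ D0) (exprn_ge0 _ (ltW e0)).
  apply: lt_trans (archi_boundP g0) _.
  by rewrite ltr_nat.
have M1 : 1 <= (M%:R : R) by rewrite ler1n.
exists (k.+1 * M)%N.
have h1 : (A0 * (k.+1 * M)%N%:R + B0) ^+ k <= (D * M%:R) ^+ k.
  have hh : A0 * (k.+1 * M)%N%:R + B0 <= D * M%:R.
    rewrite /D natrM.
    have : 0 <= (k.+1)%:R * (M%:R - 1) * B0 :> R by rewrite mulr_ge0 ?mulr_ge0 //; lra.
    have : 1 <= (k.+1)%:R :> R by rewrite ler1n.
    nra.
  apply: lerXn2r => //; rewrite nnegrE.
    by rewrite addr_ge0 // mulr_ge0.
  by rewrite mulr_ge0.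
apply: le_lt_trans h1 _.
have h2 : (M%:R * e) ^+ k.+1 < rho ^+ (k.+1 * M).
  have Me0 : 0 <= M%:R * e by rewrite mulr_ge0 // ltW.
  rewrite mulnC exprM; apply: lt_le_trans (_ : (1 + M%:R * e) ^+ k.+1 <= _).
    by rewrite ltrXn2r //; lra.
  have hb : 1 + M%:R * e <= rho ^+ M.
    have -> : rho = 1 + e by rewrite /e; ring.
    by apply: bernoulli; rewrite ltW.
  apply: lerXn2r => //; rewrite nnegrE //; lra.
apply: le_lt_trans h2.
have E : (M%:R * e) ^+ k.+1 = M%:R ^+ k * (M%:R * e ^+ k.+1) by rewrite !exprMn exprSr; ring.
rewrite E [(D * _) ^+ k]exprMn mulrC.
apply: ler_wpM2l; first by rewrite exprn_ge0.
by rewrite -ler_pdivrMr ?exprn_gt0 // ltW.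
Qed.

Lemma pow_cont (R : realType) (r d : R) (k : nat) : 0 <= r -> 0 <= d -> d <= 1 ->
  (r + d) ^+ k <= r ^+ k + d * k%:R * (r + 1) ^+ k.
Proof.
move=> r0 d0 d1; elim: k => [|k IH]; first by rewrite !expr0 mulr0 mul0r addr0.
have h1 : r ^+ k <= (r + 1) ^+ k by apply: lerXn2r; rewrite ?nnegrE //; lra.
have h0 : 0 <= r ^+ k by rewrite exprn_ge0.
set P := (r + 1) ^+ k.
rewrite !exprS -/P.
apply: le_trans (_ : (r + d) * (r ^+ k + d * k%:R * P) <= _).
  by apply: ler_wpM2l; [lra | exact: IH].
have hk : 0 <= (k%:R : R) by rewrite ler0n.
have hP : 0 <= P by rewrite exprn_ge0; lra.
have a1 : d * r ^+ k <= d * P by apply: ler_wpM2l.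
have a2 : d * (d * (k%:R * P)) <= 1 * (d * (k%:R * P)).
  by apply: ler_wpM2r => //; rewrite !mulr_ge0.
have a3 : 0 <= d * (r * P) by rewrite !mulr_ge0.
rewrite -natr1; nra.
Qed.

Section Packing.
Variables (R : realType) (k : nat).
Local Notation C := (@C R k).
Local Notation Cmono := (@Cmono R k).
Local Notation Clow := (@Clow R k).
Local Notation Cup := (@Cup R k).
Local Notation C0 := (@C0 R k).
Local Notation Cpack := (@Cpack R k).

Lemma key_ineq (m : nat) (p : 'I_m -> 'rV[R]_k) (Rad h : R) (q pp : nat) :
  0 < h -> (forall i, enorm (p i) <= Rad) ->
  (forall i j, i != j -> h < enorm (p i - p j)) ->
  (0 < q)%N -> (0 < pp)%N -> q%:R * (Rad + h / 2) <= pp%:R * (h / 2) ->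
  (m * q ^ k <= pp ^ k)%N.
Proof.
move=> h0 pB sep q0 pp0 hqp.
set c : R := (2 * k + 1)%:R.
have c0 : 0 < c by rewrite ltr0n addn1.
have kc : (k%:R : R) + k%:R < c by rewrite /c natrD natrM; lra.
have qR : 1 <= (q%:R : R) by rewrite ler1n.
have hstep u : 0 < u -> (m * q ^ k * C (u - c) <= pp ^ k * C (u + c))%N.
  move=> u0.
  set x := q%:R * u / (h / 2).
  have x0 : 0 < x by rewrite /x !divr_gt0 ?mulr_gt0 ?ltr0n.
  have hx1 : x * h / 2 = q%:R * u by rewrite /x; field; rewrite gt_eqF.
  have hx2 : x * (Rad + h / 2) <= pp%:R * u.
    have -> : x * (Rad + h / 2) = (q%:R * (Rad + h / 2)) * u / (h / 2).
      by rewrite /x; field; rewrite gt_eqF.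
    have -> : pp%:R * u = (pp%:R * (h / 2)) * u / (h / 2) by field; rewrite gt_eqF.
    apply: ler_wpM2r; first by rewrite invr_ge0; lra.
    by apply: ler_wpM2r => //; lra.
  have := Cpack _ _ _ _ _ x0 pB sep; rewrite hx1 => hp.
  apply: (@leq_trans (m * C (q%:R * u - k%:R))).
    rewrite -mulnA leq_mul2l; apply/orP; right.
    apply: (@leq_trans (q ^ k * C (u - k%:R - k%:R))).
      rewrite leq_mul2l; apply/orP; right; apply: Cmono; lra.
    apply: leq_trans (Clow _ (u - k%:R) q0) _.
    apply: Cmono; have : (0 : R) <= k%:R by []; nra.
  apply: leq_trans hp _.
  apply: leq_trans (Cmono _ _ hx2) _.
  apply: leq_trans (Cup _ u pp0) _.
  rewrite leq_mul2l; apply/orP; right; apply: Cmono; lra.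
rewrite leqNgt; apply/negP => lt.
set A := (pp ^ k)%N; set B := (m * q ^ k)%N.
have A0 : (0 < A)%N by rewrite expn_gt0 pp0.
have hrec J : (B ^ J * C 0 <= A ^ J * C (2 * c * J%:R))%N.
  elim: J => [|J IH]; first by rewrite !expn0 !mul1n mulr0.
  have := hstep (2 * c * J%:R + c) ltac:(rewrite ltr_wpDl // mulr_ge0 // mulr_ge0 //; lra).
  have e2 : 2 * c * J%:R + c + c = 2 * c * J.+1%:R by rewrite -natr1; ring.
  rewrite addrK e2 => hs.
  rewrite !expnS -mulnA -[(A * _ * _)%N]mulnA.
  apply: leq_trans (leq_mul (leqnn B) IH) _.
  by rewrite mulnCA [(A * _)%N]mulnCA leq_mul2l hs orbT.
have [J hJ] := @exp_beats_poly R (B%:R / A%:R) (4 * c) 3 k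
  ltac:(by rewrite ltr_pdivlMr ?ltr0n // mul1r ltr_nat) ltac:(lra) ltac:(lra).
have := hrec J; rewrite -(ler_nat R) !natrM [(A ^ J)%:R]natrX [(B ^ J)%:R]natrX => hr.
have C0' : (1 : R) <= (C 0)%:R by rewrite ler1n C0.
have Cp := @Cpoly R k (2 * c * J%:R) ltac:(by rewrite !mulr_ge0 //; lra).
have AJ : (0 : R) < A%:R ^+ J by rewrite exprn_gt0 // ltr0n.
have : B%:R ^+ J <= A%:R ^+ J * (4 * c * J%:R + 3) ^+ k :> R.
  apply: le_trans (_ : B%:R ^+ J * (C 0)%:R <= _).
    by rewrite ler_peMr // exprn_ge0.
  apply: le_trans hr _; apply: ler_wpM2l; first exact: ltW.
  by apply: le_trans Cp _; rewrite le_eqVlt; apply/orP; left; apply/eqP; congr (_ ^+ _); ring.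
rewrite -ler_pdivrMl // mulrC -expr_div_n => hh.
by have := lt_le_trans hJ hh; rewrite ltxx.
Qed.
End Packing.

Lemma packing (R : realType) (k m : nat) (p : 'I_m -> 'rV[R]_k) (Rad h : R) :
  0 < h -> 0 <= Rad -> (forall i, enorm (p i) <= Rad) ->
  (forall i j, i != j -> h < enorm (p i - p j)) ->
  m%:R <= (1 + 2 * Rad / h) ^+ k.
Proof.
move=> h0 R0 pB sep.
set r := 1 + 2 * Rad / h.
have r1 : 1 <= r by rewrite /r lerDl divr_ge0 ?mulr_ge0 // ltW.
have step N : (0 < N)%N -> m%:R <= (r + N%:R^-1) ^+ k.
  move=> N0; have NR : (0 : R) < N%:R by rewrite ltr0n.
  set pp := `|Num.ceil (N%:R * r)|%N.
  have c0 : 0 <= Num.ceil (N%:R * r) by rewrite ceil_ge0; nra.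
  have ppE : (pp%:R : R) = (Num.ceil (N%:R * r))%:~R by rewrite -intr_natz gez0_abs.
  have hc1 : N%:R * r <= pp%:R by rewrite ppE ceil_ge.
  have hc2 : (pp%:R : R) < N%:R * r + 1.
    by rewrite ppE; have := ceilB1_lt (N%:R * r); rewrite intrD; lra.
  have pp0 : (0 < pp)%N by rewrite -(ltr_nat R); nra.
  have hq : N%:R * (Rad + h / 2) <= pp%:R * (h / 2).
    have e : N%:R * (Rad + h / 2) = N%:R * r * (h / 2) by rewrite /r; field; rewrite gt_eqF.
    by rewrite e; apply: ler_wpM2r => //; lra.
  have := @key_ineq R k m p Rad h N pp h0 pB sep N0 pp0 hq.
  rewrite -(ler_nat R) natrM !natrX => hk.
  have hNk : (0 : R) < N%:R ^+ k by rewrite exprn_gt0.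
  rewrite -(ler_pM2r hNk) -exprMn mulrDl mulVf ?gt_eqF // mulrC.
  rewrite mulrC; apply: le_trans hk _; apply: lerXn2r; rewrite ?nnegrE ?ler0n //.
    by apply: addr_ge0 => //; apply: mulr_ge0; lra.
  by rewrite mulrC ltW.
rewrite leNgt; apply/negP => lt.
set K := k%:R * (r + 1) ^+ k.
have K0 : 0 <= K by rewrite mulr_ge0 ?exprn_ge0 //; lra.
set dl := m%:R - r ^+ k.
have dl0 : 0 < dl by rewrite /dl subr_gt0.
set N := (Num.Def.archi_bound (K / dl)).+1.
have hN : K / dl < N%:R.
  have g0 : 0 <= K / dl by rewrite divr_ge0 // ltW.
  by apply: lt_trans (archi_boundP g0) _; rewrite ltr_nat.
have NR : (0 : R) < N%:R by rewrite ltr0n.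
have := step N isT.
have d0 : 0 <= N%:R^-1 :> R by rewrite invr_ge0 ltW.
have d1 : N%:R^-1 <= 1 :> R by rewrite invr_le1 // ?ler1n // unitfE gt_eqF.
have := @pow_cont R r N%:R^-1 k (le_trans ler01 r1) d0 d1.
have : N%:R^-1 * K < dl.
  by rewrite mulrC ltr_pdivrMr // mulrC -ltr_pdivrMr.
rewrite /dl /K; nra.
Qed.

Definition extp {T : Type} {n : nat} (p : 'I_n -> T) (u : T) (i : 'I_n.+1) : T :=
  match unlift ord_max i with Some j => p j | None => u end.

Lemma net_exists (R : realType) (k : nat) (Rad L : R) : 0 < Rad -> 0 < L ->
  exists (m : nat) (p : 'I_m -> 'rV[R]_k),
     is_hnet (@eball R k Rad) (1 / (2 * L)) p /\ m%:R <= (1 + 4 * L * Rad) ^+ k.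
Proof.
move=> R0 L0.
set h := 1 / (2 * L).
have h0 : 0 < h by rewrite /h divr_gt0 // mulr_gt0.
have eb : 1 + 2 * Rad / h = 1 + 4 * L * Rad by rewrite /h; field; rewrite gt_eqF.
apply: NNPP => H.
have ind n : exists p : 'I_n -> 'rV[R]_k, (forall i, @eball R k Rad (p i)) /\
    (forall i j, i != j -> h < enorm (p i - p j)).
  elim: n => [|n [p [pB sep]]].
    by exists (fun _ => 0); split => -[].
  have pk : n%:R <= (1 + 4 * L * Rad) ^+ k by rewrite -eb; apply: (@packing _ _ _ _ _ _ h0 (ltW R0) pB sep).
  have [cov|ncov] := pselect (forall u, @eball R k Rad u -> exists i, enorm (u - p i) <= h).
    by exfalso; apply: H; exists n, p; split => //; split.
  have [u [Bu far]] : exists u, @eball R k Rad u /\ forall i, h < enorm (u - p i).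
    apply: NNPP => nex; apply: ncov => u Bu; apply: NNPP => nex2; apply: nex.
    exists u; split => // i; rewrite ltNge; apply/negP => hle; apply: nex2; by exists i.
  exists (extp p u); split.
    by move=> i; rewrite /extp; case: unliftP => [j _|_].
  move=> i j; rewrite /extp; case: unliftP => [a ->|->]; case: unliftP => [b ->|->] //.
  - by move=> nab; apply: sep; apply: contraNneq nab => ->.
  - by move=> _; rewrite enormB.
  - by rewrite eqxx.
have pos : 0 <= (1 + 4 * L * Rad) ^+ k by rewrite exprn_ge0 // addr_ge0 // ?mulr_ge0 // ltW.
have [p [pB sep]] := ind (Num.Def.archi_bound ((1 + 4 * L * Rad) ^+ k)).
have := @packing _ _ _ _ _ _ h0 (ltW R0) pB sep; rewrite eb.
by rewrite leNgt archi_boundP.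
Qed.

Theorem lemma3p2 (R : realType) (k : nat) (Rad L : R) (U : set 'rV[R]_k)
  (f : 'rV[R]_k -> R) :
  0 < Rad -> 0 < L ->
  open U -> cvx_set_on U -> @eball R k Rad `<=` U ->
  cvx_fun_on U f -> lip_on U L f ->
  (forall (m : nat) (p g : 'I_m -> 'rV[R]_k),
     is_hnet (@eball R k Rad) (1 / (2 * L)) p ->
     (forall i, subdiffU U f (p i) (g i)) ->
     forall u, @eball R k Rad u ->
       f u <= smoothG f p g u /\ smoothG f p g u <= f u + 1 + ln m%:R)
  /\
  (exists (m : nat) (p : 'I_m -> 'rV[R]_k),
     is_hnet (@eball R k Rad) (1 / (2 * L)) p /\ m%:R <= (1 + 4 * L * Rad) ^+ k).
Proof.
move=> R0 L0 oU _ BU _ lip; split.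
  move=> m p g net sg u Bu.
  exact: (@part1 R k Rad L U f m p g L0 oU BU lip net sg u Bu).
exact: net_exists.
Qed.
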